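(* For arbitrary $\sigma\ge0$, $\theta\ge0$ and $\omega\ge0$, the second order differential operator $\sigma+\Delta_{\theta,\omega}$ maps $\mathcal P^+$ into itself.
   Context: $D=d/dz$, $\Delta_{\theta,\omega}=(\theta+\omega z)D+zD^2$. $\mathcal P^+$ is the set of complex polynomials of the form $C\prod_{j=1}^m(z+\pi_j)$ with $C\in\mathbb C$, $m\in\mathbb N_0$, $\pi_j\ge0$ (polynomials all of whose zeros are real and nonpositive, including constants). *)

(* Defs.v *)
From mathcomp Require Import all_boot all_order all_algebra.
From mathcomp Require Import complex.
From mathcomp Require Import reals.
Set Implicit Arguments. Unset Strict Implicit. Unset Printing Implicit Defensive.
Import Order.TTheory GRing.Theory Num.Theory.
Local Open Scope ring_scope.
Local Open Scope complex_scope.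

Definition Pplus (R : realType) (p : {poly R[i]}) : Prop :=
  exists (c : R[i]) (s : seq R),
    (forall x, x \in s -> 0 <= x) /\
    p = c *: \prod_(x <- s) ('X + (x%:C)%:P).

Definition Delta (R : realType) (theta omega : R) (f : {poly R[i]}) : {poly R[i]} :=
  ((theta%:C)%:P + (omega%:C)%:P * 'X) * f^`() + 'X * f^`(2).

Definition sigmaDelta (R : realType) (sigma theta omega : R) (f : {poly R[i]}) : {poly R[i]} :=
  (sigma%:C) *: f + Delta theta omega f.

(* Main.v *)
Require Import Defs.
From mathcomp Require Import all_boot all_order all_algebra.
From mathcomp Require Import complex.
From mathcomp Require Import reals.
From mathcomp Require Import ring lra.
Import Order.TTheory GRing.Theory Num.Theory.
Local Open Scope ring_scope.
Local Open Scope complex_scope.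
Notation cRe := complex.Re.
Notation cIm := complex.Im.
Section S.
Variable R : realType.
Implicit Types (s t : seq R) (w : R[i]).
Lemma invE (a b : R) : (a +i* b)^-1 = (a / (a^+2 + b^+2)) +i* (- b / (a^+2+b^+2)).
Proof. by rewrite /GRing.inv /= mulNr. Qed.
Lemma addE (a b c d : R) : (a +i* b) + (c +i* d) = (a+c) +i* (b+d).
Proof. by []. Qed.
Lemma mulE (a b c d : R) : (a +i* b) * (c +i* d) = (a*c - b*d) +i* (a*d + b*c).
Proof. by []. Qed.
Lemma ImD (x y : R[i]) : cIm (x + y) = cIm x + cIm y.
Proof. by case: x => a b; case: y => c d. Qed.
Lemma Im_sum (I : Type) (r : seq I) (F : I -> R[i]) :
  cIm (\sum_(i <- r) F i) = \sum_(i <- r) cIm (F i).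
Proof. by apply: (big_morph _ ImD). Qed.

Definition P s : {poly R[i]} := \prod_(x <- s) ('X + (x%:C)%:P).
Definition goodb w := (cIm w == 0) && (cRe w <= 0).

Lemma sum_ge0_seq s (F : R -> R) : (forall x, x \in s -> 0 <= F x) ->
  0 <= \sum_(x <- s) F x.
Proof. by move=> H; rewrite big_seq; apply: sumr_ge0. Qed.

Lemma sum_gt0_seq s (F : R -> R) : (forall x, x \in s -> 0 < F x) -> s != [::] ->
  0 < \sum_(x <- s) F x.
Proof.
case: s => // x s H _; rewrite big_cons.
apply: ltr_pwDl; first by apply: H; rewrite mem_head.
by apply: sum_ge0_seq => y Hy; apply/ltW/H; rewrite inE Hy orbT.
Qed.

Lemma sum_eq0_seq s (F : R -> R) : (forall x, x \in s -> 0 <= F x) ->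
  \sum_(x <- s) F x = 0 -> forall x, x \in s -> F x = 0.
Proof.
elim: s => // y s IH H; rewrite big_cons => E x.
have H1 : 0 <= F y by apply: H; rewrite mem_head.
have H2 : 0 <= \sum_(x <- s) F x by apply: sum_ge0_seq => z Hz; apply: H; rewrite inE Hz orbT.
have Fy : F y = 0 by apply/eqP; rewrite eq_le H1 andbT -E lerDl.
rewrite inE => /orP [/eqP -> //|Hx].
apply: IH => //; first by move=> z Hz; apply: H; rewrite inE Hz orbT.
by move: E; rewrite Fy add0r.
Qed.

Lemma P_eval s w : (P s).[w] = \prod_(x <- s) (w + x%:C).
Proof. by rewrite /P horner_prod; apply: eq_bigr => x _; rewrite hornerD hornerX hornerC. Qed.

Lemma P_deriv s w : (forall x, x \in s -> w + x%:C != 0) ->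
  (P s)^`().[w] = (P s).[w] * \sum_(x <- s) (w + x%:C)^-1.
Proof.
elim: s => [|y s IH] H; first by rewrite /P big_nil derivC horner0 big_nil mulr0.
have Hy : w + y%:C != 0 by apply: H; rewrite mem_head.
rewrite /P big_cons derivM derivD derivX derivC addr0 mul1r hornerD hornerM.
rewrite -/(P s) IH; last by move=> z Hz; apply: H; rewrite inE Hz orbT.
rewrite hornerM hornerD hornerX hornerC big_cons.
by field.
Qed.

Lemma bad_nonzero w x : ~~ goodb w -> 0 <= x -> w + x%:C != 0.
Proof.
case: w => a b; rewrite /goodb /= => Hb Hx; apply/negP => /eqP E.
have : (a + x) +i* (b + 0) = 0 by rewrite -E.
case=> E1 E2; move: Hb; rewrite addr0 in E2; rewrite E2 eqxx /=.
have -> : a = - x by apply/eqP; rewrite -subr_eq0 opprK E1.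
by rewrite oppr_le0 Hx.
Qed.

Lemma factor_good (p : {poly R[i]}) : p != 0 -> (forall w, root p w -> goodb w) ->
  exists2 s, (forall x, x \in s -> 0 <= x) & p = lead_coef p *: P s.
Proof.
move=> p0 H; have [r Hr] := closed_field_poly_normal p.
have Hroot : forall z, z \in r -> goodb z.
  move=> z Hz; apply: H; rewrite Hr rootZ ?lead_coef_eq0 //.
  by rewrite root_prod_XsubC.
exists (map (fun z => - cRe z) r).
  move=> x /mapP [z Hz ->]; have /andP [_ ?] := Hroot z Hz; by rewrite oppr_ge0.
rewrite {1}Hr /P big_map; congr (_ *: _); apply: eq_big_seq => z Hz.
have /andP [/eqP Hi _] := Hroot z Hz.
rewrite -polyCN; congr (_ + _%:P); case: z Hz Hi => a b /= _ ->.
by rewrite /real_complex_def; change (Complex (-a) (-0) = Complex (-a) 0); rewrite oppr0.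
Qed.

Lemma S_nonzero s w : s != [::] -> (forall x, x \in s -> 0 <= x) -> ~~ goodb w ->
  \sum_(x <- s) (w + x%:C)^-1 != 0.
Proof.
move=> sn Hs; case: w => a b; rewrite /goodb /= => Hb.
have [b0|bn0] := eqVneq b 0.
  move: Hb; rewrite b0 eqxx /= -ltNge => a0.
  have E : \sum_(x <- s) ((a +i* 0) + x%:C)^-1 = (\sum_(x <- s) (a + x)^-1)%:C.
    rewrite rmorph_sum; apply: eq_bigr => x _; rewrite fmorphV; congr (_^-1).
    by rewrite /real_complex_def addE addr0.
  rewrite E; apply/negP => /eqP [] /eqP; apply/negP; rewrite gt_eqF //.
  apply: sum_gt0_seq => // x Hx; rewrite invr_gt0; have := Hs x Hx; lra.
apply/negP => /eqP E; have : cIm (\sum_(x <- s) ((a +i* b) + x%:C)^-1) = 0 by rewrite E.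
rewrite Im_sum => E2.
have : b * \sum_(x <- s) cIm ((a +i* b) + x%:C)^-1 < 0.
  rewrite mulr_sumr -oppr_gt0 -sumrN; apply: sum_gt0_seq => // x Hx.
  rewrite /real_complex_def addE invE /= addr0 mulNr mulrN opprK mulrA -expr2.
  apply: divr_gt0; first by rewrite exprn_even_gt0.
  by apply: ltr_pwDr; [rewrite exprn_even_gt0 | rewrite sqr_ge0].
by rewrite E2 mulr0 ltxx.
Qed.

Lemma L1 s w : s != [::] -> (forall x, x \in s -> 0 <= x) -> root (P s)^`() w -> goodb w.
Proof.
move=> sn Hs; apply: contraLR => Hb.
have Hn : forall x, x \in s -> w + x%:C != 0 by move=> x Hx; apply: bad_nonzero => //; apply: Hs.
rewrite /root P_deriv // mulf_neq0 ?S_nonzero // P_eval prodf_seq_neq0.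
by apply/allP => x Hx; apply: Hn.
Qed.

Lemma Imb_neg (a b x : R) : b != 0 -> 0 <= x -> b * cIm ((a +i* b) + x%:C)^-1 < 0.
Proof.
move=> bn0 Hx; rewrite -oppr_gt0.
rewrite /real_complex_def addE invE /= addr0 mulNr mulrN opprK mulrA -expr2.
apply: divr_gt0; first by rewrite exprn_even_gt0.
by apply: ltr_pwDr; [rewrite exprn_even_gt0 | rewrite sqr_ge0].
Qed.

Lemma ImW (a b x : R) : b != 0 -> cIm ((a +i* b) * ((a +i* b) + x%:C)^-1) =
  b * x / ((a + x)^+2 + b^+2).
Proof.
move=> bn0; have N : (a + x)^+2 + b^+2 != 0.
  by rewrite gt_eqF // ltr_pwDr ?exprn_even_gt0 ?sqr_ge0.
rewrite /real_complex_def addE invE /= addr0. by field. Qed.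

Lemma sum1C (t : seq R) : \sum_(x <- t) (1 : R[i]) = (size t)%:R.
Proof. by elim: t => [|y t IH]; rewrite ?big_nil ?big_cons // IH /= -add1n natrD. Qed.
Lemma Q_contra (sg th om : R) s t w :
  0 <= sg -> 0 <= th -> 0 <= om -> s != [::] ->
  (forall x, x \in s -> 0 <= x) -> (forall x, x \in t -> 0 <= x) -> ~~ goodb w ->
  sg%:C / (\sum_(x <- s) (w + x%:C)^-1) + th%:C + om%:C * w
    + w * \sum_(x <- t) (w + x%:C)^-1 = 0 ->
  [/\ sg = 0, th = 0, om = 0 & t = [::]].
Proof.
move=> sg0 th0 om0 sn Hs Ht; case: w => a b; rewrite /goodb /= => Hb.
have [b0|bn0] := eqVneq b 0.
  move: Hb; rewrite b0 eqxx /= -ltNge => a0.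
  have E : forall r : seq R, \sum_(x <- r) ((a +i* 0) + x%:C)^-1 = (\sum_(x <- r) (a + x)^-1)%:C.
    move=> r; rewrite rmorph_sum; apply: eq_bigr => x _; rewrite fmorphV; congr (_^-1).
    by rewrite /real_complex_def addE addr0.
  have Ew : a +i* 0 = a%:C by [].
  rewrite !E Ew -fmorph_div -!rmorphM -!rmorphD => /eqP; rewrite fmorph_eq0 => /eqP H.
  set Ss := \sum_(x <- s) (a + x)^-1 in H.
  set St := \sum_(x <- t) (a + x)^-1 in H.
  have Ss0 : 0 < Ss by apply: sum_gt0_seq => // x Hx; rewrite invr_gt0; have := Hs x Hx; lra.
  have St0 : 0 <= St by apply: sum_ge0_seq => x Hx; rewrite invr_ge0; have := Ht x Hx; lra.
  have T1 : 0 <= sg / Ss by apply: divr_ge0 => //; apply: ltW.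
  have T3 : 0 <= om * a by apply: mulr_ge0 => //; apply: ltW.
  have T4 : 0 <= a * St by apply: mulr_ge0 => //; apply: ltW.
  have E1 : sg / Ss = 0 by lra.
  have E3 : om * a = 0 by lra.
  have E4 : a * St = 0 by lra.
  split; first by move: E1 => /eqP; rewrite mulf_eq0 invr_eq0 (gt_eqF Ss0) orbF => /eqP.
  - by lra.
  - by move: E3 => /eqP; rewrite mulf_eq0 (gt_eqF a0) orbF => /eqP.
  - have [//|tn] := eqVneq t [::]; exfalso; move: E4 => /eqP; rewrite mulf_eq0 (gt_eqF a0) /=.
    rewrite gt_eqF //; apply: sum_gt0_seq => // x Hx; rewrite invr_gt0; have := Ht x Hx; lra.
move=> Eq.
have Hv : b * cIm (\sum_(x <- s) ((a +i* b) + x%:C)^-1) < 0.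
  rewrite Im_sum mulr_sumr -oppr_gt0 -sumrN; apply: sum_gt0_seq => // x Hx.
  by rewrite oppr_gt0; apply: Imb_neg => //; apply: Hs.
move: Eq; move: Hv.
case E : (\sum_(x <- s) ((a +i* b) + x%:C)^-1) => [u v] /= Hv Eq.
have := congr1 (@complex.Im R) Eq; rewrite !ImD mulr_sumr Im_sum.
rewrite (eq_big_seq (fun x => b * x / ((a + x)^+2 + b^+2))); last first.
  by move=> x Hx; rewrite ImW.
rewrite invE /real_complex_def /= !mul0r !addr0 => H.
have v0 : v != 0 by apply/negP => /eqP v0; move: Hv; rewrite v0 mulr0 ltxx.
have N0 : 0 < u ^+ 2 + v ^+ 2 by rewrite ltr_pwDr ?exprn_even_gt0 ?sqr_ge0.
have H2 : sg * (- (b * v) / (u ^+ 2 + v ^+ 2)) + om * b ^+ 2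
    + \sum_(i <- t) (b ^+ 2 * i / ((a + i) ^+ 2 + b ^+ 2)) = 0.
  have -> : \sum_(i <- t) (b ^+ 2 * i / ((a + i) ^+ 2 + b ^+ 2))
     = b * \sum_(i <- t) (b * i / ((a + i) ^+ 2 + b ^+ 2)).
    by rewrite mulr_sumr; apply: eq_bigr => i _; rewrite !mulrA expr2.
  have -> : sg * (- (b * v) / (u ^+ 2 + v ^+ 2)) + om * b ^+ 2 =
    b * (sg * (- v / (u ^+ 2 + v ^+ 2)) + om * b) by ring.
  by rewrite -mulrDr H mulr0.
set T1 := sg * _ in H2; set T3 := om * _ in H2; set T4 := \sum_(i <- t) _ in H2.
have Nb : forall i, 0 <= i -> 0 < (a + i) ^+ 2 + b ^+ 2.
  by move=> i _; rewrite ltr_pwDr ?exprn_even_gt0 ?sqr_ge0.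
have c1 : 0 < - (b * v) / (u ^+ 2 + v ^+ 2) by rewrite divr_gt0 // oppr_gt0.
have G1 : 0 <= T1 by apply: mulr_ge0 => //; apply: ltW.
have G3 : 0 <= T3 by rewrite mulr_ge0 // sqr_ge0.
have G4i : forall i, i \in t -> 0 <= b ^+ 2 * i / ((a + i) ^+ 2 + b ^+ 2).
  move=> i Hi; apply: divr_ge0; first by apply: mulr_ge0; [apply: sqr_ge0 | exact: Ht].
  by apply: ltW; apply: Nb; exact: Ht.
have G4 : 0 <= T4 by apply: sum_ge0_seq.
have E1 : T1 = 0 by lra.
have E3 : T3 = 0 by lra.
have E4 : T4 = 0 by lra.
have sg_0 : sg = 0 by move: E1 => /eqP; rewrite mulf_eq0 (gt_eqF c1) orbF => /eqP.
have om_0 : om = 0.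
  by move: E3 => /eqP; rewrite mulf_eq0 expf_eq0 (negbTE bn0) andbF orbF => /eqP.
have t0 : forall i, i \in t -> i = 0.
  move=> i Hi; have := @sum_eq0_seq t _ G4i E4 i Hi => /eqP.
  rewrite mulf_eq0 invr_eq0 (gt_eqF (Nb _ (Ht _ Hi))) orbF mulf_eq0 expf_eq0.
  by rewrite (negbTE bn0) andbF /= => /eqP.
have wn0 : a +i* b != 0.
  by apply/negP => /eqP [] _ /eqP; apply/negP.
move: Eq; rewrite sg_0 om_0 (eq_big_seq (fun _ => (a +i* b)^-1)); last first.
  by move=> x Hx; rewrite (t0 x Hx) /real_complex_def addE !addr0.
rewrite mulr_sumr (eq_bigr (fun _ => 1)); last by move=> i _; rewrite mulfV.
rewrite sum1C mul0r mul0r add0r addr0 -(rmorph_nat (real_complex R)) -rmorphD.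
move/eqP; rewrite fmorph_eq0 => /eqP Ht0.
have th_0 : th = 0 by have : 0 <= (size t)%:R :> R by []; lra.
split => //; move: Ht0; rewrite th_0 add0r => /eqP; rewrite pnatr_eq0 size_eq0 => /eqP //.
Qed.
Lemma main_P (sg th om : R) s : 0 <= sg -> 0 <= th -> 0 <= om ->
  (forall x, x \in s -> 0 <= x) -> Pplus (sigmaDelta sg th om (P s)).
Proof.
move=> sg0 th0 om0 Hs.
set g := sigmaDelta sg th om (P s).
have D2 : (P s)^`(2) = (P s)^`()^`() by rewrite derivnS derivn1.
have [g0|gn0] := eqVneq g 0.
  by exists 0, [::]; split => //; rewrite g0 scale0r.
have [s0|sn] := eqVneq s [::].
  exists sg%:C, [::]; split => //.
  rewrite /g /sigmaDelta /Delta D2 s0 /P big_nil -polyC1 !derivC !mulr0 !addr0.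
  done.
set h := (P s)^`().
have hn0 : h != 0.
  apply/negP => /eqP h0; have : root h 1 by rewrite h0 root0.
  move/(@L1 s 1 sn Hs); rewrite /goodb /= ler10 andbF //.
have [t Ht Eh] := @factor_good h hn0 (fun w => @L1 s w sn Hs).
set d := lead_coef h in Eh.
have dn0 : d != 0 by rewrite lead_coef_eq0.
suff Hroots : forall w, root g w -> goodb w.
  by have [s' Hs' Eg] := @factor_good g gn0 Hroots; exists (lead_coef g), s'.
move=> w; apply: contraTT => Hb.
have Hn : forall x, x \in s -> w + x%:C != 0 by move=> x Hx; apply: bad_nonzero => //; apply: Hs.
have Hnt : forall x, x \in t -> w + x%:C != 0 by move=> x Hx; apply: bad_nonzero => //; apply: Ht.
have Fw : (P s).[w] != 0 by rewrite P_eval prodf_seq_neq0; apply/allP => x Hx; apply: Hn.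
have Ptw : (P t).[w] != 0 by rewrite P_eval prodf_seq_neq0; apply/allP => x Hx; apply: Hnt.
have Ssn := @S_nonzero s w sn Hs Hb.
set Ss := \sum_(x <- s) (w + x%:C)^-1 in Ssn.
set St := \sum_(x <- t) (w + x%:C)^-1.
have hw : h.[w] = (P s).[w] * Ss by rewrite /h P_deriv.
have hwn : h.[w] != 0 by rewrite hw mulf_neq0.
have Fw' : (P s).[w] = h.[w] / Ss by rewrite hw mulfK.
have h'w : h^`().[w] = h.[w] * St.
  by rewrite {1 2}Eh derivZ !hornerZ P_deriv // mulrA.
set Q := sg%:C / Ss + th%:C + om%:C * w + w * St.
have Egw : g.[w] = h.[w] * Q.
  rewrite /g /sigmaDelta /Delta D2 -/h !(hornerD, hornerZ, hornerM, hornerX, hornerC) h'w Fw' /Q.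
  by field.
rewrite /root Egw mulf_neq0 //; apply/negP => /eqP Q0.
have [sg_0 th_0 om_0 t_0] := @Q_contra sg th om s t w sg0 th0 om0 sn Hs Ht Hb Q0.
move: gn0; rewrite /g /sigmaDelta /Delta D2 -/h Eh t_0 /P big_nil derivZ -polyC1 derivC.
by rewrite sg_0 th_0 om_0 rmorph0 scaler0 mulr0 addr0 scale0r add0r polyC0 mul0r addr0 mul0r eqxx.
Qed.

End S.

Theorem lemma3 (R : realType) (sigma theta omega : R) :
  0 <= sigma -> 0 <= theta -> 0 <= omega ->
  forall f : {poly R[i]}, Pplus f -> Pplus (sigmaDelta sigma theta omega f).
Proof.
move=> sg0 th0 om0 f [c [s [Hs ->]]].
have -> : sigmaDelta sigma theta omega (c *: \prod_(x <- s) ('X + (x%:C)%:P))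
   = c *: sigmaDelta sigma theta omega (P _ s).
  rewrite /sigmaDelta /Delta /P; set F := \prod_(x <- s) _.
  rewrite derivZ derivnZ !scalerDr scalerA mulrC -scalerA -!scalerAr.
  done.
have [c' [s' [Hs' ->]]] := @main_P R sigma theta omega s sg0 th0 om0 Hs.
by exists (c * c'), s'; split => //; rewrite scalerA.
Qed.
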